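(* Let $q$ be a root of unity with $q^8\ne1$, $N=\mathrm{ord}(q^4)$, $\epsilon=q^{N^2}$, $\vec w\in\mathbb C^4$, and $\sigma\in\mathbb C^\times$ with $z_0:=\epsilon^2(\sigma^N+\sigma^{-N})\ne\pm2$. Then the image of $(\Pi_s,\Pi_t):E^0_{\sigma,\vec w}\to\mathbb C^2$ is exactly the curve $\{(x,y):xy=R(z_0,\vec w)\}$, where $$R(z_0,\vec w)=\frac{\kappa(W_1,W_2,z_0)\,\kappa(W_3,W_4,z_0)}{(z_0^2-4)^2},\qquad W_j=T_N(w_j).$$
   Context: $T_N$ is the Chebyshev polynomial with $T_N(t+t^{-1})=t^N+t^{-N}$. $\kappa(a,b,c)=a^2+b^2+c^2+abc-4$. For indices $i\in\mathbb Z/N$: $\lambda'_i=q^{4i+2}\sigma+q^{-4i-2}\sigma^{-1}$, $\hat\lambda_i=q^{4i}\sigma-q^{-4i}\sigma^{-1}$, $\hat\lambda'_i=q^{4i+2}\sigma-q^{-4i-2}\sigma^{-1}$; $r_i(\sigma,\vec w)=\dfrac{\kappa(w_1,w_2,\lambda'_i)\kappa(w_3,w_4,\lambda'_i)}{\hat\lambda_i\hat\lambda_{i+1}(\hat\lambda'_i)^2}$; $E^0_{\sigma,\vec w}=\{(s_1,\dots,s_N,t_1,\dots,t_N)\in\mathbb C^{2N}:s_it_i=r_i(\sigma,\vec w)\}$; $\Pi_s=\prod_{i=1}^Ns_i$, $\Pi_t=\prod_{i=1}^Nt_i$. *)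

(* Defs.v *)
From HB Require Import structures.
From mathcomp Require Import all_boot all_order all_algebra.
From mathcomp Require Import complex reals.
Set Implicit Arguments. Unset Strict Implicit. Unset Printing Implicit Defensive.
Import Order.TTheory GRing.Theory Num.Theory.
Local Open Scope ring_scope.

Section Defs.
Variable F : fieldType.

(* Chebyshev polynomial (as a function) T_N, the unique polynomial with
   T_N(t + t^-1) = t^N + t^-N: T_0 = 2, T_1 = x, T_{n+2} = x T_{n+1} - T_n. *)
Fixpoint chebT (n : nat) (x : F) : F :=
  match n with
  | 0 => 2
  | 1 => x
  | (m.+1 as k).+1 => x * chebT k x - chebT m x
  end.

Definition kappa (a b c : F) : F := a ^+ 2 + b ^+ 2 + c ^+ 2 + a * b * c - 4.

Definition lambda' (q sigma : F) (i : nat) : F :=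
  q ^+ (4 * i + 2) * sigma + (q ^+ (4 * i + 2))^-1 * sigma^-1.
Definition lambdahat (q sigma : F) (i : nat) : F :=
  q ^+ (4 * i) * sigma - (q ^+ (4 * i))^-1 * sigma^-1.
Definition lambdahat' (q sigma : F) (i : nat) : F :=
  q ^+ (4 * i + 2) * sigma - (q ^+ (4 * i + 2))^-1 * sigma^-1.

(* r_i(sigma, w) for i in Z/N, represented by 0 <= i < N; index i+1 taken mod N *)
Definition r_coef (N : nat) (q sigma : F) (w : 'I_4 -> F) (i : nat) : F :=
  kappa (w 0%R) (w 1%R) (lambda' q sigma i) * kappa (w 2%R) (w 3%R) (lambda' q sigma i)
  / (lambdahat q sigma i * lambdahat q sigma (i.+1 %% N) * (lambdahat' q sigma i) ^+ 2).

Definition E0 (N : nat) (q sigma : F) (w : 'I_4 -> F) (s t : 'I_N -> F) : Prop :=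
  forall i : 'I_N, s i * t i = r_coef N q sigma w i.

Definition Pi (N : nat) (s : 'I_N -> F) : F := \prod_(i < N) s i.

Definition R_fun (N : nat) (z0 : F) (w : 'I_4 -> F) : F :=
  kappa (chebT N (w 0%R)) (chebT N (w 1%R)) z0 * kappa (chebT N (w 2%R)) (chebT N (w 3%R)) z0
  / (z0 ^+ 2 - 4) ^+ 2.

Definition is_order (a : F) (N : nat) : Prop :=
  (0 < N)%N /\ a ^+ N = 1 /\ forall m, (0 < m)%N -> a ^+ m = 1 -> (N <= m)%N.

Definition rootof1 (q : F) : Prop := exists n, (0 < n)%N /\ q ^+ n = 1.
End Defs.

(* Main.v *)
From HB Require Import structures.
From mathcomp Require Import all_boot all_order all_algebra.
From mathcomp Require Import complex reals.
From mathcomp Require Import ring.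
Require Import Defs.
Set Implicit Arguments. Unset Strict Implicit. Unset Printing Implicit Defensive.
Import Order.TTheory GRing.Theory Num.Theory.
Local Open Scope ring_scope.

Section G.
Variable F : fieldType.

Lemma L0 (N : nat) (Q : F) : N.-primitive_root Q -> forall x y : F,
  \prod_(i < N) (x - Q ^+ i * y) = x ^+ N - y ^+ N.
Proof.
move=> pQ x y.
have N0 : (0 < N)%N := prim_order_gt0 pQ.
have := congr1 (fun p => p.[x / y]) (factor_Xn_sub_1 pQ).
rewrite horner_prod big_mkord !hornerE => H.
have [->|y0] := eqVneq y 0.
  rewrite expr0n (negPf (lt0n_neq0 N0)) subr0.
  by under eq_bigr do rewrite mulr0 subr0; rewrite prodr_const card_ord.
transitivity (\prod_(i < N) (y * (x / y - Q ^+ i))).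
  by apply: eq_bigr => i _; rewrite mulrBr mulrCA divff // mulr1 mulrC.
rewrite big_split /= prodr_const card_ord.
have -> : \prod_(i < N) (x / y - Q ^+ i) = (x / y) ^+ N - 1.
  by rewrite -H; apply: eq_bigr => i _; rewrite !hornerE.
by rewrite mulrBr -exprMn mulrCA divff // mulr1 mulr1.
Qed.
End G.
Section G2.
Variable F : fieldType.
Lemma prodN1 (N : nat) (f : 'I_N -> F) : \prod_(i < N) (- f i) = (-1) ^+ N * \prod_(i < N) f i.
Proof.
under eq_bigr do rewrite -mulN1r.
by rewrite big_split /= prodr_const card_ord.
Qed.

Lemma L1 (N : nat) (Q : F) (Y a b : F) : N.-primitive_root Q -> Y != 0 ->
  \prod_(i < N) ((Q ^+ i * Y - a) * (Q ^+ i * Y - b) / (Q ^+ i * Y))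
  = (a ^+ N - Y ^+ N) * (b ^+ N - Y ^+ N) / ((-1) ^+ N.+1 * Y ^+ N).
Proof.
move=> pQ Y0.
rewrite big_split big_split /= prodfV.
have E c : \prod_(i < N) (Q ^+ i * Y - c) = (-1) ^+ N * (c ^+ N - Y ^+ N).
  by rewrite -(L0 pQ) -prodN1; apply: eq_bigr => i _; rewrite opprB.
rewrite !E.
have -> : \prod_(i < N) (Q ^+ i * Y) = (-1) ^+ N.+1 * Y ^+ N.
  have H := L0 pQ 0 Y.
  rewrite (eq_bigr (fun i : 'I_N => - (Q ^+ i * Y))) in H; last by move=> i _; rewrite sub0r.
  rewrite prodN1 in H.
  have N0 : (0 < N)%N := prim_order_gt0 pQ.
  rewrite expr0n (negPf (lt0n_neq0 N0)) sub0r in H.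
  have ss : (-1) ^+ N * (-1) ^+ N = 1 :> F by rewrite -expr2 -exprM mulnC exprM sqrrN expr1n expr1n.
  by rewrite exprS mulN1r mulNr -mulrN -H mulrA ss mul1r.
have ss : (-1) ^+ N * (-1) ^+ N = 1 :> F by rewrite -expr2 -exprM mulnC exprM sqrrN expr1n expr1n.
by rewrite mulrACA ss mul1r.
Qed.
End G2.
Section G3.
Variable F : fieldType.
Lemma chebT_inv (u : F) : u != 0 -> forall n, chebT n (u + u^-1) = u ^+ n + u^-1 ^+ n.
Proof.
move=> u0 n.
suff : chebT n (u + u^-1) = u ^+ n + u^-1 ^+ n /\ chebT n.+1 (u + u^-1) = u ^+ n.+1 + u^-1 ^+ n.+1 by case.
elim: n => [|n [IH1 IH2]]; first by rewrite /= !expr0 !expr1.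
split => //.
have -> : chebT n.+2 (u + u^-1) = (u + u^-1) * chebT n.+1 (u + u^-1) - chebT n (u + u^-1) by [].
rewrite IH1 IH2 !exprS.
field; exact: u0.
Qed.

Lemma kappa_fact (u v c : F) : u != 0 -> v != 0 ->
  kappa (u + u^-1) (v + v^-1) c = (c + u * v + (u * v)^-1) * (c + u / v + v / u).
Proof. move=> u0 v0; rewrite /kappa; field; by apply/andP. Qed.

Lemma term_fact (Z m : F) : Z != 0 -> m != 0 ->
  Z + Z^-1 - (m + m^-1) = (Z - m) * (Z - m^-1) / Z.
Proof. move=> Z0 m0; field; by apply/andP. Qed.
End G3.
Section G4.
Variable F : closedFieldType.
Lemma exists_uinv (a : F) : exists u : F, u != 0 /\ a = u + u^-1.
Proof.
have [x Hx] := @solve_monicpoly F 2 (fun i => if i == 0%N then -1 else a) isT.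
rewrite big_ord_recr big_ord1 /= expr0 expr1 mulr1 in Hx.
have x0 : x != 0.
  apply/eqP => x0; move: Hx; rewrite x0 expr0n /= mulr0 addr0 => /eqP.
  by rewrite eq_sym oppr_eq0 oner_eq0.
exists x; split => //.
apply: (mulIf x0); rewrite mulrDl mulVf // -expr2 Hx; ring.
Qed.
End G4.
Section G5.
Variable F : closedFieldType.
Lemma Kprod (N : nat) (Q Y a b : F) : N.-primitive_root Q -> Y != 0 ->
  \prod_(i < N) kappa a b (Q ^+ i * Y + (Q ^+ i * Y)^-1)
  = kappa (chebT N a) (chebT N b) (- (-1) ^+ N * (Y ^+ N + (Y ^+ N)^-1)).
Proof.
move=> pQ Y0.
have [u [u0 ->]] := exists_uinv a.
have [v [v0 ->]] := exists_uinv b.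
have Q0 : Q != 0.
  apply/eqP => Q0; have := prim_expr_order pQ; rewrite Q0 expr0n.
  by rewrite (negPf (lt0n_neq0 (prim_order_gt0 pQ))) => /eqP; rewrite eq_sym oner_eq0.
have m10 : - (u * v) != 0 by rewrite oppr_eq0 mulf_neq0.
have m20 : - (u / v) != 0 by rewrite oppr_eq0 mulf_neq0 // invr_eq0.
transitivity (\prod_(i < N)
   (((Q ^+ i * Y - (- (u * v))) * (Q ^+ i * Y - (- (u * v))^-1) / (Q ^+ i * Y)) *
    ((Q ^+ i * Y - (- (u / v))) * (Q ^+ i * Y - (- (u / v))^-1) / (Q ^+ i * Y)))).
  apply: eq_bigr => i _.
  have Z0 : Q ^+ i * Y != 0 by rewrite mulf_neq0 // expf_neq0.
  rewrite kappa_fact // -!term_fact //.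
  field; by rewrite v0 oppr_eq0 u0 Y0 m10 (expf_neq0 _ Q0).
rewrite big_split /= !L1 // !chebT_inv // !exprVn.
have -> : (- (u * v)) ^+ N = (-1) ^+ N * (u ^+ N * v ^+ N) by rewrite (exprNn (u * v)) exprMn.
have -> : (- (u / v)) ^+ N = (-1) ^+ N * (u ^+ N / v ^+ N) by rewrite (exprNn (u / v)) exprMn exprVn.
have U0 : u ^+ N != 0 by rewrite expf_neq0.
have V0 : v ^+ N != 0 by rewrite expf_neq0.
have Y0' : Y ^+ N != 0 by rewrite expf_neq0.
rewrite exprS -signr_odd.
rewrite /kappa; case: (odd N); rewrite /= ?expr0 ?expr1; field; by rewrite ?Y0' ?V0 ?U0 ?oppr_eq0 ?oner_eq0.
Qed.
End G5.
Section G6.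
Variable F : fieldType.
Lemma Dprod (N : nat) (Q X : F) : N.-primitive_root Q -> X != 0 ->
  \prod_(i < N) (Q ^+ i * X - (Q ^+ i * X)^-1)
  = (1 - X ^+ N) * ((-1) ^+ N - X ^+ N) / ((-1) ^+ N.+1 * X ^+ N).
Proof.
move=> pQ X0.
have Q0 : Q != 0.
  apply/eqP => Q0; have := prim_expr_order pQ; rewrite Q0 expr0n.
  by rewrite (negPf (lt0n_neq0 (prim_order_gt0 pQ))) => /eqP; rewrite eq_sym oner_eq0.
rewrite -[X in X - _](expr1n F N) -(L1 _ _ pQ X0); apply: eq_bigr => i _.
have Z0 : Q ^+ i * X != 0 by rewrite mulf_neq0 // expf_neq0.
field; by rewrite X0 expf_neq0.
Qed.

Lemma parity (q : F) (N : nat) : is_order (q ^+ 4) N ->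
  ((q ^+ 2) ^+ N) ^+ 2 = 1 /\
  ((odd N /\ (q ^+ (N * N)) ^+ 2 = (q ^+ 2) ^+ N) \/
   (~~ odd N /\ (q ^+ 2) ^+ N = -1 /\ (q ^+ (N * N)) ^+ 2 = 1)).
Proof.
move=> [N0 [QN Qmin]].
have p2 : ((q ^+ 2) ^+ N) ^+ 2 = 1.
  have q4 : (q ^+ 2) ^+ 2 = q ^+ 4 by rewrite -exprM.
  by rewrite -exprM mulnC exprM q4 QN.
have e2 : (q ^+ (N * N)) ^+ 2 = ((q ^+ 2) ^+ N) ^+ N.
  by rewrite -exprM mulnC mulnA !exprM.
split => //; rewrite e2.
have HN := odd_double_half N.
case: (odd N) HN => /= HN; [left|right].
  by split => //; rewrite -{2}HN exprD expr1 -mul2n exprM p2 expr1n mulr1.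
have Hp : (q ^+ 2) ^+ N = -1.
  have := p2; move/eqP; rewrite sqrf_eq1 => /orP [/eqP p1|/eqP //].
  exfalso.
  have k1 : (q ^+ 4) ^+ N./2 = 1.
    by rewrite -p1 -{2}HN add0n -mul2n -!exprM mulnA.
  have := Qmin _ _ k1.
  move: N0; rewrite -{1 3}HN add0n -mul2n.
  case: (N./2) => [|k] //= _; rewrite mul2n -addnn.
  by move=> /(_ isT); rewrite addSn ltnS leqNgt ltn_addl.
split => //; split => //.
by rewrite -{2}HN add0n -mul2n exprM p2 expr1n.
Qed.
End G6.

Lemma image_lemma (F : fieldType) (N : nat) (r : 'I_N -> F) (x y : F) : (0 < N)%N ->
 (exists s t : 'I_N -> F, (forall i, s i * t i = r i) /\ \prod_(i < N) s i = x /\ \prod_(i < N) t i = y)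
 <-> x * y = \prod_(i < N) r i.
Proof.
move=> N0; split.
  by move=> [s [t [H [<- <-]]]]; rewrite -big_split; apply: eq_bigr => i _; exact: H.
move=> Hxy.
have [x0|x0] := eqVneq x 0.
  have : \prod_(i < N) r i == 0 by rewrite -Hxy x0 mul0r.
  case/prodf_eq0 => j _ /eqP rj.
  pose t' i := if r i == 0 then 1 else r i.
  pose s' i := if r i == 0 then 0 else 1 : F.
  have Pt0 : \prod_(i < N | i != j) t' i != 0.
    apply/prodf_neq0 => i _; rewrite /t'; case: ifP => [_|/negbT //]; exact: oner_neq0.
  exists (fun i => if i == j then 0 else s' i), (fun i => if i == j then y / \prod_(i < N | i != j) t' i else t' i).
  split; [|split].
  - move=> i; case: eqP => [->|_]; first by rewrite mul0r rj.
    by rewrite /s' /t'; case: eqP => [->|_]; rewrite ?mul0r ?mul1r.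
  - by rewrite (bigD1 j) //= eqxx mul0r x0.
  - rewrite (bigD1 j) //= eqxx.
    rewrite [X in _ * X](eq_bigr t'); last by move=> i /negPf Hi /=; rewrite Hi.
    by rewrite mulfVK.
have j0 : 'I_N := Ordinal N0.
exists (fun i => if i == j0 then x else 1), (fun i => if i == j0 then r j0 / x else r i).
split; [|split].
- by move=> i; case: eqP => [->|_]; [rewrite mulrC mulfVK | rewrite mul1r].
- by rewrite (bigD1 j0) //= eqxx big1 ?mulr1 // => i /negPf Hi /=; rewrite Hi.
- rewrite (bigD1 j0) //= eqxx (eq_bigr r); last by move=> i /negPf Hi /=; rewrite Hi.
  have E : \prod_(i < N) r i = r j0 * \prod_(i < N | i != j0) r i by rewrite (bigD1 j0).
  by rewrite mulrAC -E -Hxy mulrC mulKf.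
Qed.

Section Main.
Variable F : closedFieldType.
Lemma rho_lemma (q : F) (N : nat) (w : 'I_4 -> F) (sigma : F) :
  is_order (q ^+ 4) N -> N.-primitive_root (q ^+ 4) -> sigma != 0 ->
  \prod_(i < N) r_coef N q sigma w i
  = R_fun N ((q ^+ (N * N)) ^+ 2 * (sigma ^+ N + (sigma ^+ N)^-1)) w.
Proof.
move=> ord pQ s0.
have Q0 : q ^+ 4 != 0.
  apply/eqP => Q0; have := prim_expr_order pQ; rewrite Q0 expr0n.
  by rewrite (negPf (lt0n_neq0 (prim_order_gt0 pQ))) => /eqP; rewrite eq_sym oner_eq0.
have q0 : q != 0 by apply: contraNneq Q0 => ->; rewrite expr0n.
have Y0 : q ^+ 2 * sigma != 0 by rewrite mulf_neq0 // expf_neq0.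
have HK a b : \prod_(i < N) kappa a b (lambda' q sigma i)
   = kappa (chebT N a) (chebT N b) (- (-1) ^+ N * ((q ^+ 2 * sigma) ^+ N + ((q ^+ 2 * sigma) ^+ N)^-1)).
  rewrite -(Kprod a b pQ Y0); apply: eq_bigr => i _.
  by rewrite /lambda' -exprM mulrA -exprD invfM.
have H1 : \prod_(i < N) lambdahat q sigma i = 
   (1 - sigma ^+ N) * ((-1) ^+ N - sigma ^+ N) / ((-1) ^+ N.+1 * sigma ^+ N).
  rewrite -(Dprod pQ s0); apply: eq_bigr => i _.
  by rewrite /lambdahat -exprM invfM.
have H2 : \prod_(i < N) lambdahat q sigma ((i.+1) %% N) = 
   (1 - sigma ^+ N) * ((-1) ^+ N - sigma ^+ N) / ((-1) ^+ N.+1 * sigma ^+ N).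
  have -> : sigma ^+ N = (q ^+ 4 * sigma) ^+ N by rewrite exprMn (prim_expr_order pQ) mul1r.
  rewrite -(Dprod pQ (mulf_neq0 Q0 s0)); apply: eq_bigr => i _.
  by rewrite /lambdahat exprM (expr_mod _ (prim_expr_order pQ)) exprSr -mulrA; congr (_ - _); rewrite !invfM !mulrA.
have H3 : \prod_(i < N) lambdahat' q sigma i = 
   (1 - (q ^+ 2 * sigma) ^+ N) * ((-1) ^+ N - (q ^+ 2 * sigma) ^+ N) / ((-1) ^+ N.+1 * (q ^+ 2 * sigma) ^+ N).
  rewrite -(Dprod pQ Y0); apply: eq_bigr => i _.
  by rewrite /lambdahat' -exprM mulrA -exprD invfM.
rewrite /r_coef big_split /= prodfV !big_split /= HK HK H1 H2 H3 /R_fun exprMn.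
have S0 : sigma ^+ N != 0 by rewrite expf_neq0.
have [p2 Hpar] := parity ord.
have Hs : (-1) ^+ N.+1 = - (-1) ^+ N :> F by rewrite exprS mulN1r.
rewrite Hs.
have : (q ^+ 2) ^+ N = 1 \/ (q ^+ 2) ^+ N = -1.
  by move/eqP: p2; rewrite sqrf_eq1 => /orP [/eqP ->|/eqP ->]; [left|right].
move=> Hp; rewrite -signr_odd.
case: Hpar => [[oN ->]|[oN [pm ->]]];
  [rewrite oN /= expr1; case: Hp => -> | rewrite (negPf oN) /= expr0 pm];
  (congr (_ / _); [congr (kappa _ _ _ * kappa _ _ _)|]).
all: field; by rewrite ?S0 ?oppr_eq0 ?oner_eq0.
Qed.
End Main.

Unset Implicit Arguments.
Theorem mainTheorem18 (R : realType) (q : R[i]) (N : nat) (w : 'I_4 -> R[i]) (sigma : R[i]) :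
  rootof1 q -> q ^+ 8 != 1 ->
  is_order (q ^+ 4) N ->
  sigma != 0 ->
  let eps := q ^+ (N * N) in
  let z0 := eps ^+ 2 * (sigma ^+ N + (sigma ^+ N)^-1) in
  z0 != 2 -> z0 != -2 ->
  forall x y : R[i],
    (exists s t : 'I_N -> R[i], E0 q sigma w s t /\ Pi s = x /\ Pi t = y) <->
    x * y = R_fun N z0 w.
Proof.
move=> _ _ ord s0 eps z0 _ _ x y.
have [N0 [QN Qmin]] := ord.
have pQ : N.-primitive_root (q ^+ 4).
  have [m pm mN] := prim_order_exists N0 QN.
  have m0 := prim_order_gt0 pm.
  suff -> : N = m by [].
  apply/eqP; rewrite eqn_leq (dvdn_leq N0 mN) andbT; apply: Qmin => //; exact: prim_expr_order.
rewrite /z0 /eps -(rho_lemma w ord pQ s0).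
exact: (image_lemma (fun i : 'I_N => r_coef N q sigma w i) x y N0).
Qed.
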